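(* For every $k\in\mathbb{N}$ and all words $A,B\in\mathsf{W}_\omega$ with $A\sim B$, we have $Ak\sim Bk$.
   Context: Words are finite strings over $\mathbb{N}$; $\mathsf{W}_\omega$ is the set of all words, $\Lambda$ the empty word, $Ak$ the word $A$ followed by the symbol $k$. For $k\in\mathbb{N}$, $\mathsf{S}_k$ is the set of words all of whose symbols are $\ge k$. Given a linear preorder $\precsim$ with $A\sim B$ iff $A\precsim B\wedge B\precsim A$ and $A\prec B$ iff $A\precsim B\wedge\neg B\precsim A$, a finite sequence $(A_1,\dots,A_p)$ is lexicographically not greater than $(B_1,\dots,B_q)$ iff either $p\le q$ and $A_i\sim B_i$ for all $i\le p$, or there is $s<\min(p,q)$ with $A_i\sim B_i$ for $i\le s$ and $A_{s+1}\prec B_{s+1}$. A lexicographically maximal subsequence of a finite sequence is a subsequence that is lexicographically not less than every subsequence. The linear preorder $\precsim$ on $\mathsf{W}_\omega$ is defined by recursion on (largest symbol of $AB$) $-$ (smallest symbol of $AB$): $\Lambda\precsim\Lambda$; if $AB$ is nonempty with minimal symbol $n$, write uniquely $A=A_1n\cdots nA_k$, $B=B_1n\cdots nB_l$ ($k,l\ge1$) with $A_i,B_j\in\mathsf{S}_{n+1}$ (possibly empty); let $C,D$ be lexicographically maximal subsequences of $(A_1,\dots,A_k)$, $(B_1,\dots,B_l)$; then $A\precsim B$ iff $C$ is lexicographically not greater than $D$. *)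

(* Defs.v *)
From mathcomp Require Import all_boot.
Set Implicit Arguments. Unset Strict Implicit. Unset Printing Implicit Defensive.

Definition word := seq nat.

Definition minsym (s : word) : nat := foldr minn (head 0 s) s.
Definition maxsym (s : word) : nat := foldr maxn 0 s.

(* [parts n A] = [:: A_1; ...; A_k] where A = A_1 n A_2 n ... n A_k,
   i.e. A is cut at every occurrence of the symbol n (k = count n A + 1). *)
Fixpoint parts (n : nat) (A : word) : seq word :=
  match A with
  | [::] => [:: [::]]
  | x :: A' => let r := parts n A' in
               if x == n then [::] :: r else (x :: head [::] r) :: behead r
  end.

(* (A_1..A_p) lexicographically not greater than (B_1..B_q) w.r.t. the
   preorder [le]; [~] is le both ways, [<] is le and not le backwards. *)
Fixpoint lexle (T : Type) (le : T -> T -> Prop) (s t : seq T) : Prop :=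
  match s, t with
  | [::], _ => True
  | _ :: _, [::] => False
  | a :: s', b :: t' =>
      (le a b /\ ~ le b a) \/ (le a b /\ le b a /\ lexle le s' t')
  end.

Definition lexmax (le : word -> word -> Prop) (C s : seq word) : Prop :=
  subseq C s /\ forall S, subseq S s -> lexle le S C.

(* Recursive definition of the preorder with fuel; the fuel bounds
   (largest symbol) - (smallest symbol), the recursion parameter. *)
Fixpoint wle_fuel (f : nat) (A B : word) : Prop :=
  match f with
  | 0 => True
  | f'.+1 =>
      if A ++ B is [::] then True else
      let n := minsym (A ++ B) in
      exists C D, lexmax (wle_fuel f') C (parts n A) /\
                  lexmax (wle_fuel f') D (parts n B) /\
                  lexle (wle_fuel f') C D
  end.

Definition wle (A B : word) : Prop :=
  wle_fuel (maxsym (A ++ B) - minsym (A ++ B)).+1 A B.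

Definition wsim (A B : word) : Prop := wle A B /\ wle B A.

(* Main.v *)
Require Import Defs.
From mathcomp Require Import all_boot zify.
From Stdlib Require Import Lia Setoid ClassicalEpsilon Classical.
Set Implicit Arguments. Unset Strict Implicit. Unset Printing Implicit Defensive.


Lemma lexle_ext (le1 le2 : word -> word -> Prop) (U : seq word) s t :
  (forall x y, x \in U -> y \in U -> (le1 x y <-> le2 x y)) ->
  {subset s <= U} -> {subset t <= U} ->
  (lexle le1 s t <-> lexle le2 s t).
Proof.
move=> H; elim: s t => [|a s IH] [|b t] //= sU tU.
have aU : a \in U by apply: sU; rewrite mem_head.
have bU : b \in U by apply: tU; rewrite mem_head.
have sU' : {subset s <= U} by move=> x xs; apply: sU; rewrite inE xs orbT.
have tU' : {subset t <= U} by move=> x xs; apply: tU; rewrite inE xs orbT.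
by rewrite (H _ _ aU bU) (H _ _ bU aU) (IH _ sU' tU').
Qed.

Lemma lexmax_ext (le1 le2 : word -> word -> Prop) (U : seq word) C s :
  (forall x y, x \in U -> y \in U -> (le1 x y <-> le2 x y)) ->
  {subset s <= U} -> (lexmax le1 C s <-> lexmax le2 C s).
Proof.
move=> H sU; rewrite /lexmax.
have sub S : subseq S s -> {subset S <= U}.
  by move=> /mem_subseq SS x /SS; apply: sU.
split=> [[Cs HS]|[Cs HS]]; split=> // S Ss.
- by rewrite -(lexle_ext H (sub _ Ss) (sub _ Cs)); apply: HS.
- by rewrite (lexle_ext H (sub _ Ss) (sub _ Cs)); apply: HS.
Qed.

Section Gen.
Variable R : rel word.
Notation lx := (lexle (fun x y : word => is_true (R x y))).

Fixpoint g (s : seq word) : seq word :=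
  if s is y :: s' then (if all (fun z => R z y) s' then y :: g s' else g s') else [::].

Lemma g_rcons P x : g (rcons P x) = rcons (filter (R x) (g P)) x.
Proof.
elim: P => [|y P IH] //=.
rewrite all_rcons IH /=.
by case: (all (fun z => R z y) P) => /=; case: (R x y).
Qed.

Lemma g_subseq s : subseq (g s) s.
Proof.
elim: s => //= y s IH; case: ifP => _; first by rewrite /= eqxx.
exact: subseq_trans IH (subseq_cons s y).
Qed.

Definition eqv := all2 (fun x y => R x y && R y x).

Lemma eqv_lexle s t : eqv s t -> lx s t.
Proof.
elim: s t => [|a s IH] [|b t] //= /andP[/andP[h1 h2] h3].
by right; split; [|split; [|apply: IH]].
Qed.

Lemma eqv_sym s t : eqv s t -> eqv t s.
Proof.
elim: s t => [|a s IH] [|b t] //= /andP[/andP[h1 h2] h3].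
by rewrite h1 h2 IH.
Qed.

Lemma lexle_eqv s t : lx s t -> lx t s -> eqv s t.
Proof.
elim: s t => [|a s IH] [|b t] //=.
move=> [[h1 h2]|[h1 [h2 h3]]] [[h4 h5]|[h4 [h5 h6]]].
- by case: (h2 h4).
- by case: (h2 h4).
- by case: (h5 h1).
- by rewrite h1 h2 (IH _ h3 h6).
Qed.

Lemma eqv_rcons s t a b :
  eqv (rcons s a) (rcons t b) = eqv s t && (R a b && R b a).
Proof.
elim: s t => [|x s IH] [|y t] /=.
- by rewrite andbT.
- by case: t => [|z t]; rewrite /= ?andbF.
- by case: s {IH} => [|z s]; rewrite /= ?andbF.
- by rewrite IH andbA.
Qed.

Lemma eqv_filter (p q : pred word) s t :
  (forall x y, R x y -> R y x -> p x = q y) -> eqv s t -> eqv (filter p s) (filter q t).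
Proof.
move=> H; elim: s t => [|x s IH] [|y t] //= /andP[/andP[h1 h2] h3].
rewrite (H _ _ h1 h2); case: (q y) => /=; last exact: IH.
by rewrite h1 h2 IH.
Qed.

Variable D : word -> Prop.
Hypothesis Rtot : forall x y, D x -> D y -> R x y || R y x.
Hypothesis Rtr : forall x y z, D x -> D y -> D z -> R x y -> R y z -> R x z.
Definition DS (s : seq word) := forall x, x \in s -> D x.

Lemma DS_cons a s : DS (a :: s) -> D a /\ DS s.
Proof.
move=> H; split; first by apply: H; rewrite mem_head.
by move=> x xs; apply: H; rewrite inE xs orbT.
Qed.

Lemma Rrefl x : D x -> R x x.
Proof. by move=> Dx; have := Rtot Dx Dx; rewrite orbb. Qed.

Lemma lexle_trans s t u : DS s -> DS t -> DS u -> lx s t -> lx t u -> lx s u.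
Proof.
elim: s t u => [|a s IH] [|b t] [|c u] //= Ds Dt Du H1 H2 //.
have [Da Ds'] := DS_cons Ds; have [Db Dt'] := DS_cons Dt; have [Dc Du'] := DS_cons Du.
move: H1 H2 => [[h1 h2]|[h1 [h2 h3]]] [[h4 h5]|[h4 [h5 h6]]].
- left; split; first exact: Rtr Da Db Dc h1 h4.
  by move=> Rca; apply: h2; exact: Rtr Db Dc Da h4 Rca.
- left; split; first exact: Rtr Da Db Dc h1 h4.
  by move=> Rca; apply: h2; exact: Rtr Db Dc Da h4 Rca.
- left; split; first exact: Rtr Da Db Dc h1 h4.
  by move=> Rca; apply: h5; exact: Rtr Dc Da Db Rca h1.
- right; split; first exact: Rtr Da Db Dc h1 h4.
  split; first exact: Rtr Dc Db Da h5 h2.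
  exact: IH Ds' Dt' Du' h3 h6.
Qed.

Lemma lexle_total s t : DS s -> DS t -> lx s t \/ lx t s.
Proof.
elim: s t => [|a s IH] [|b t] Ds Dt; try by [left | right].
have [Da Ds'] := DS_cons Ds; have [Db Dt'] := DS_cons Dt.
rewrite /=.
case Hab: (R a b); case Hba: (R b a).
- by case: (IH t Ds' Dt') => h; [left|right]; right.
- by left; left; split => //; rewrite Hba.
- by right; left; split => //; rewrite Hab.
- by move: (Rtot Da Db); rewrite Hab Hba.
Qed.

Lemma lexle_prefix s u : DS s -> lx s (s ++ u).
Proof.
elim: s => [|a s IH] Ds //=.
have [Da Ds'] := DS_cons Ds.
by right; split; [exact: Rrefl | split; [exact: Rrefl | exact: IH]].
Qed.

Lemma g_head s : s != [::] -> DS s ->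
  exists h t, g s = h :: t /\ h \in s /\ forall y, y \in s -> R y h.
Proof.
elim: s => [|y s IH] // _ Ds /=.
have [Dy Ds'] := DS_cons Ds.
case: ifP => Hall.
- exists y, (g s); split=> //; split; first exact: mem_head.
  move=> z; rewrite inE => /orP[/eqP->|zs]; first exact: Rrefl.
  exact: (allP Hall).
- have sn : s != [::] by case: s Hall {IH Ds Ds'}.
  have [h [t [E [hs Hh]]]] := IH sn Ds'.
  exists h, t; split=> //; split; first by rewrite inE hs orbT.
  move=> z; rewrite inE => /orP[/eqP->|]; last exact: Hh.
  have /allPn [w ws Hw] := negbT Hall.
  have Dw := Ds' w ws.
  have Ryw : R y w by move: (Rtot Dy Dw); rewrite (negbTE Hw) orbF.
  exact: Rtr Dy Dw (Ds' h hs) Ryw (Hh w ws).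
Qed.

Lemma g_lexmax s : DS s -> lexmax (fun x y => R x y) (g s) s.
Proof.
move=> Ds; split; first exact: g_subseq.
elim: s Ds => [|y s IH] Ds S.
  by rewrite subseq0 => /eqP->.
have [Dy Ds'] := DS_cons Ds.
case: S => [|z S] // Hsub.
have Hsub' : subseq (if z == y then S else z :: S) s by [].
move: Hsub'; case: eqP => [->|nzy] Hsub'.
- rewrite /=; case: ifP => Hall.
  + by right; split; [exact: Rrefl | split; [exact: Rrefl | exact: IH]].
  + have sn : s != [::] by case: s Hall {IH Ds Ds' Hsub Hsub'}.
    have [h [t [E [hs Hh]]]] := g_head sn Ds'.
    rewrite E.
    have /allPn [w ws Hw] := negbT Hall.
    have Dw := Ds' w ws.
    have Ryw : R y w by move: (Rtot Dy Dw); rewrite (negbTE Hw) orbF.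
    left; split; first exact: Rtr Dy Dw (Ds' h hs) Ryw (Hh w ws).
    move=> Rhy; move/negP: Hw; apply.
    exact: Rtr Dw (Ds' h hs) Dy (Hh w ws) Rhy.
- have zs : z \in s by apply: (mem_subseq Hsub'); rewrite mem_head.
  have Dz := Ds' z zs.
  rewrite /=; case: ifP => Hall; last exact: (IH Ds' (z :: S) Hsub').
  have Rzy : R z y := allP Hall z zs.
  have HS : subseq S s := subseq_trans (subseq_cons S z) Hsub'.
  case Ryz: (R y z).
  + by right; split=> //; split=> //; exact: IH.
  + by left; split=> //; rewrite Ryz.
Qed.

Lemma lexle_filter F a a' : DS F -> D a -> D a' -> R a a' ->
  lx (rcons (filter (R a) F) a) (rcons (filter (R a') F) a').
Proof.
move=> DF Da Da' Raa'.
elim: F DF => [|y F IH] DF /=.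
  case Ha'a: (R a' a).
  - by right; split=> //; split.
  - by left; split=> //; rewrite Ha'a.
have [Dy DF'] := DS_cons DF.
case Ha'y: (R a' y).
  rewrite (Rtr Da Da' Dy Raa' Ha'y) /=.
  by right; split; [exact: Rrefl | split; [exact: Rrefl | exact: IH]].
case Hay: (R a y); last exact: IH.
have [h [t [E [Rh Dh]]]] : exists h t, rcons (filter (R a') F) a' = h :: t /\ R a' h /\ D h.
  case Ef: (filter (R a') F) => [|h t].
  - by exists a', [::]; split=> //; split=> //; exact: Rrefl.
  - have : h \in filter (R a') F by rewrite Ef mem_head.
    rewrite mem_filter => /andP[Rh hF].
    by exists h, (rcons t a'); split=> //; split=> //; exact: DF' h hF.
rewrite E /=.
have Rya' : R y a' by move: (Rtot Da' Dy); rewrite Ha'y.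
left; split; first exact: Rtr Dy Da' Dh Rya' Rh.
move=> Rhy; move: Ha'y; rewrite (Rtr Da' Dh Dy Rh Rhy) //.
Qed.

End Gen.


Lemma foldr_minn_le a s x : x \in s -> foldr minn a s <= x.
Proof.
elim: s => //= y s IH; rewrite inE => /orP[/eqP->|/IH h]; first exact: geq_minl.
exact: leq_trans (geq_minr _ _) h.
Qed.

Lemma foldr_minn_mem a s : foldr minn a s \in a :: s.
Proof.
elim: s => /= [|y s IH]; first by rewrite mem_head.
rewrite /minn; case: ifP => _; first by rewrite !inE eqxx orbT.
by move: IH; rewrite !inE => /orP[->|->]; rewrite ?orbT.
Qed.

Lemma minsym_le s x : x \in s -> minsym s <= x.
Proof. exact: foldr_minn_le. Qed.

Lemma minsym_mem s : s != [::] -> minsym s \in s.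
Proof.
case: s => // h t _; have := foldr_minn_mem h (h :: t).
by rewrite /minsym inE => /orP[/eqP->|]; rewrite ?mem_head.
Qed.

Lemma maxsym_ge s x : x \in s -> x <= maxsym s.
Proof.
elim: s => //= y s IH; rewrite inE => /orP[/eqP->|/IH h]; first exact: leq_maxl.
exact: leq_trans h (leq_maxr _ _).
Qed.

Lemma maxsym_le s M : (forall x, x \in s -> x <= M) -> maxsym s <= M.
Proof.
elim: s => //= y s IH H; rewrite geq_max H ?mem_head //=.
by apply: IH => x xs; apply: H; rewrite inE xs orbT.
Qed.

Lemma parts_sub n A x y : x \in parts n A -> y \in x -> (y \in A) && (y != n).
Proof.
elim: A x => [|z A IH] x /=; first by rewrite inE => /eqP->.
case: eqP => [zn|nzn].
  rewrite inE => /orP[/eqP->//|xr yx].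
  by have /andP[h1 h2] := IH _ xr yx; rewrite inE h1 orbT h2.
rewrite inE => /orP[/eqP->|xr yx].
  rewrite inE => /orP[/eqP->|].
    by rewrite mem_head; apply/eqP.
  case E: (parts n A) => [|h t] //= yh.
  have := IH h; rewrite E mem_head => /(_ isT yh) /andP[h1 h2].
  by rewrite inE h1 orbT h2.
have xr' : x \in parts n A by case: (parts n A) xr => //= h t xt; rewrite inE xt orbT.
by have /andP[h1 h2] := IH _ xr' yx; rewrite inE h1 orbT h2.
Qed.

Lemma parts_size n A : sumn (map size (parts n A)) + count_mem n A = size A.
Proof.
elim: A => [|z A IH] //=.
case: (z == n) => /=.
  by rewrite -IH add0n add1n addnS.
case E: (parts n A) IH => [|h t] /= IH; first by rewrite -IH.
rewrite -IH add0n; lia.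
Qed.

Lemma size_mem_sumn (s : seq word) x : x \in s -> size x <= sumn (map size s).
Proof.
elim: s => //= y s IH; rewrite inE => /orP[/eqP->|/IH h]; first exact: leq_addr.
exact: leq_trans h (leq_addl _ _).
Qed.

Lemma parts_size_le n A x : x \in parts n A -> size x + count_mem n A <= size A.
Proof.
move=> xp; rewrite -(parts_size n A) leq_add2r; exact: size_mem_sumn.
Qed.

Lemma parts_notin n A : n \notin A -> parts n A = [:: A].
Proof.
elim: A => [|z A IH] //=; rewrite inE negb_or => /andP[nz nA].
by rewrite eq_sym (negbTE nz) IH.
Qed.

Lemma parts_rcons n A k : exists P a, parts n A = rcons P a /\
  parts n (rcons A k) = if k == n then rcons (rcons P a) [::] else rcons P (rcons a k).
Proof.
elim: A => [|z A [P [a [E1 E2]]]] /=.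
  exists [::], [::]; split=> //; by case: eqP.
rewrite E1 E2.
case: eqP => [zn|nzn].
  by exists ([::] :: P), a; split=> //; case: eqP.
case: P E1 E2 => [|p P] E1 E2 /=.
  exists [::], (z :: a); split=> //; by case: eqP.
exists ((z :: p) :: P), a; split=> //; by case: eqP.
Qed.


Definition rng (s : word) := maxsym s - minsym s.

Lemma parts_sym n A B x s : x \in parts n A ++ parts n B -> s \in x -> (s \in A ++ B) && (s != n).
Proof.
rewrite mem_cat => /orP[] xp sx.
  by have /andP[h1 h2] := parts_sub xp sx; rewrite mem_cat h1 h2.
by have /andP[h1 h2] := parts_sub xp sx; rewrite mem_cat h1 orbT h2.
Qed.

Lemma parts_rng n A B x y : A ++ B != [::] -> n = minsym (A ++ B) ->
  x \in parts n A ++ parts n B -> y \in parts n A ++ parts n B ->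
  x ++ y = [::] \/ rng (x ++ y) < rng (A ++ B).
Proof.
move=> nz En xU yU.
case E: (x ++ y) => [|c t]; first by left.
right; rewrite -E /rng.
have symb s : s \in x ++ y -> (n < s) && (s <= maxsym (A ++ B)).
  rewrite mem_cat => /orP[] sx.
  - have /andP[h1 h2] := parts_sym xU sx.
    by rewrite ltn_neqAle eq_sym h2 En minsym_le //= maxsym_ge.
  - have /andP[h1 h2] := parts_sym yU sx.
    by rewrite ltn_neqAle eq_sym h2 En minsym_le //= maxsym_ge.
have nz' : x ++ y != [::] by rewrite E.
have /andP[h1 h2] := symb _ (minsym_mem nz').
have h3 : minsym (x ++ y) <= maxsym (x ++ y) by apply: maxsym_ge; exact: minsym_mem.
have h4 : maxsym (x ++ y) <= maxsym (A ++ B).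
  by apply: maxsym_le => s /symb /andP[].
rewrite -En; lia.
Qed.

Lemma wle_fuel_S f A B : A ++ B != [::] ->
  (wle_fuel f.+1 A B <-> exists C D, lexmax (wle_fuel f) C (parts (minsym (A ++ B)) A) /\
                  lexmax (wle_fuel f) D (parts (minsym (A ++ B)) B) /\
                  lexle (wle_fuel f) C D).
Proof. by rewrite /=; case: (A ++ B) => // c s _; exact: iff_refl. Qed.

Lemma subU n A B : {subset parts n A <= parts n A ++ parts n B} /\ {subset parts n B <= parts n A ++ parts n B}.
Proof. by split=> x xp; rewrite mem_cat xp ?orbT. Qed.

Lemma fuel_eq f h A B : A ++ B = [::] \/ (rng (A ++ B) < f /\ rng (A ++ B) < h) ->
  (wle_fuel f A B <-> wle_fuel h A B).
Proof.
elim: f h A B => [|f IH] [|h] A B H //.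
- case: H => [E|[]//]; by rewrite /= E.
- case: H => [E|[]//]; by rewrite /= E.
case: (eqVneq (A ++ B) [::]) => [E|nz]; first by rewrite /= E.
rewrite !wle_fuel_S //.
set n := minsym (A ++ B).
have Hr : forall x y, x \in parts n A ++ parts n B -> y \in parts n A ++ parts n B ->
    (wle_fuel f x y <-> wle_fuel h x y).
  move=> x y xU yU; apply: IH.
  case: (parts_rng nz (erefl n) xU yU) => [->|lt]; first by left.
  right; case: H => [E|[h1 h2]]; first by rewrite E in nz.
  split; apply: leq_trans lt _; by rewrite -ltnS.
have [sA sB] := subU n A B.
split=> [[C [D [h1 [h2 h3]]]]|[C [D [h1 [h2 h3]]]]]; exists C, D.
- have sC : {subset C <= parts n A ++ parts n B}.
    by move=> x /(mem_subseq h1.1) /sA.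
  have sD : {subset D <= parts n A ++ parts n B}.
    by move=> x /(mem_subseq h2.1) /sB.
  by rewrite -(lexmax_ext _ Hr sA) -(lexmax_ext _ Hr sB) -(lexle_ext Hr sC sD).
- have sC : {subset C <= parts n A ++ parts n B}.
    by move=> x /(mem_subseq h1.1) /sA.
  have sD : {subset D <= parts n A ++ parts n B}.
    by move=> x /(mem_subseq h2.1) /sB.
  by rewrite (lexmax_ext _ Hr sA) (lexmax_ext _ Hr sB) (lexle_ext Hr sC sD).
Qed.

Lemma wle_unfold A B : A ++ B != [::] ->
  (wle A B <-> exists C D, lexmax wle C (parts (minsym (A ++ B)) A) /\
                  lexmax wle D (parts (minsym (A ++ B)) B) /\ lexle wle C D).
Proof.
move=> nz; rewrite {1}/wle wle_fuel_S //.
set n := minsym (A ++ B).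
have Hr : forall x y, x \in parts n A ++ parts n B -> y \in parts n A ++ parts n B ->
    (wle_fuel (maxsym (A ++ B) - n) x y <-> wle x y).
  move=> x y xU yU; rewrite /wle; apply: fuel_eq.
  case: (parts_rng nz (erefl n) xU yU) => [->|lt]; first by left.
  by right; split.
have [sA sB] := subU n A B.
split=> [[C [D [h1 [h2 h3]]]]|[C [D [h1 [h2 h3]]]]]; exists C, D.
- have sC : {subset C <= parts n A ++ parts n B}.
    by move=> x /(mem_subseq h1.1) /sA.
  have sD : {subset D <= parts n A ++ parts n B}.
    by move=> x /(mem_subseq h2.1) /sB.
  by rewrite -(lexmax_ext _ Hr sA) -(lexmax_ext _ Hr sB) -(lexle_ext Hr sC sD).
- have sC : {subset C <= parts n A ++ parts n B}.
    by move=> x /(mem_subseq h1.1) /sA.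
  have sD : {subset D <= parts n A ++ parts n B}.
    by move=> x /(mem_subseq h2.1) /sB.
  by rewrite (lexmax_ext _ Hr sA) (lexmax_ext _ Hr sB) (lexle_ext Hr sC sD).
Qed.


Definition wleb (A B : word) : bool :=
  if excluded_middle_informative (wle A B) then true else false.

Lemma wlebE A B : wleb A B <-> wle A B.
Proof. by rewrite /wleb; case: excluded_middle_informative. Qed.

Lemma wle_nil : wle [::] [::].
Proof. by rewrite /wle /=. Qed.

Definition inr m M (x : word) := all (fun s => m <= s <= M) x.

Definition TT (Dp : word -> Prop) :=
  (forall x y, Dp x -> Dp y -> wleb x y || wleb y x) /\
  (forall x y z, Dp x -> Dp y -> Dp z -> wleb x y -> wleb y z -> wleb x z).

Notation lxb := (lexle (fun x y : word => is_true (wleb x y))).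

Lemma lexmax_wleb C s : lexmax wle C s <-> lexmax (fun x y => is_true (wleb x y)) C s.
Proof.
apply: (lexmax_ext (U := s)) => // x y _ _; by rewrite wlebE.
Qed.

Lemma lexle_wleb C D : lexle wle C D <-> lxb C D.
Proof.
apply: (lexle_ext (U := C ++ D)) => [x y _ _|x|x]; first by rewrite wlebE.
- by rewrite mem_cat => ->.
- by rewrite mem_cat => ->; rewrite orbT.
Qed.

Lemma parts_inr m M A x : inr m M A -> x \in parts m A -> inr m.+1 M x.
Proof.
move=> /allP HA xp; apply/allP => s sx.
have /andP[sA sm] := parts_sub xp sx.
have /andP[h1 h2] := HA s sA.
by rewrite h2 andbT ltn_neqAle eq_sym sm h1.
Qed.

Lemma wle_base m M A B : inr m M A -> inr m M B -> TT (inr m.+1 M) ->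
  (wle A B <-> lxb (g wleb (parts m A)) (g wleb (parts m B))).
Proof.
move=> HA HB [Tt Ttr].
case: (eqVneq (A ++ B) [::]) => [E|nz].
  have [-> ->] : A = [::] /\ B = [::] by move: E; case: (A); case: (B).
  rewrite /=; split=> _; last exact: wle_nil.
  by right; split; [|split]; try (apply/wlebE; exact: wle_nil).
have mn : m <= minsym (A ++ B).
  have := minsym_mem nz; rewrite mem_cat => /orP[] /[dup] h.
  - by move: HA => /allP /[apply] /andP[].
  - by move: HB => /allP /[apply] /andP[].
case: (eqVneq (minsym (A ++ B)) m) => [Em|Nm].
- rewrite wle_unfold // Em.
  have DA : DS (inr m.+1 M) (parts m A) by move=> x; exact: parts_inr.
  have DB : DS (inr m.+1 M) (parts m B) by move=> x; exact: parts_inr.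
  have Dsub s t : subseq s t -> DS (inr m.+1 M) t -> DS (inr m.+1 M) s.
    by move=> /mem_subseq st Dt x /st; exact: Dt.
  split=> [[C [D [h1 [h2 h3]]]]|H].
  + move/lexmax_wleb: h1 => h1; move/lexmax_wleb: h2 => h2; move/lexle_wleb: h3 => h3.
    have DC := Dsub _ _ h1.1 DA; have DD := Dsub _ _ h2.1 DB.
    have DgA := Dsub _ _ (g_subseq wleb (parts m A)) DA.
    have DgB := Dsub _ _ (g_subseq wleb (parts m B)) DB.
    have L1 : lxb (g wleb (parts m A)) C := h1.2 _ (g_subseq _ _).
    have L2 : lxb D (g wleb (parts m B)) := (g_lexmax Tt Ttr DB).2 _ h2.1.
    apply: (lexle_trans Ttr DgA DD DgB) L2.
    exact: (lexle_trans Ttr DgA DC DD) L1 h3.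
  + exists (g wleb (parts m A)), (g wleb (parts m B)).
    split; first by apply/lexmax_wleb; exact: (g_lexmax Tt Ttr DA).
    split; first by apply/lexmax_wleb; exact: (g_lexmax Tt Ttr DB).
    by apply/lexle_wleb.
- have mlt : m < minsym (A ++ B) by rewrite ltn_neqAle eq_sym Nm.
  have nin X : {subset X <= A ++ B} -> m \notin X.
    move=> sX; apply/negP => /sX /minsym_le; rewrite leqNgt mlt //.
  rewrite !parts_notin; first last.
  + by apply: nin => x xB; rewrite mem_cat xB ?orbT.
  + by apply: nin => x xA; rewrite mem_cat xA ?orbT.
  rewrite /=; split; last by case=> [[h _]|[h _]]; apply/wlebE.
  move=> H; have h : wleb A B by apply/wlebE.
  case E: (wleb B A).
  + by right; split=> //; split.
  + by left; split.
Qed.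



Lemma DS_g m M A : inr m M A -> DS (inr m.+1 M) (g wleb (parts m A)).
Proof.
move=> HA x /(mem_subseq (g_subseq _ _)); exact: parts_inr.
Qed.

Lemma TT_all d : forall m M, M < m + d -> TT (inr m M).
Proof.
elim: d => [|d IH] m M lt.
  have E x : inr m M x -> x = [::].
    case: x => // s x /= /andP[/andP[h1 h2] _]; lia.
  have wn : wleb [::] [::] by apply/wlebE; exact: wle_nil.
  split=> [x y /E-> /E->|x y z /E-> /E-> /E->] //; by rewrite wn.
have [Tt Ttr] := IH m.+1 M ltac:(by rewrite addSnnS).
split.
- move=> x y Hx Hy.
  case: (lexle_total Tt (DS_g Hx) (DS_g Hy)) => h.
  + by have /wlebE-> : wle x y by apply/(wle_base Hx Hy (conj Tt Ttr)).
  + have /wlebE-> : wle y x by apply/(wle_base Hy Hx (conj Tt Ttr)).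
    by rewrite orbT.
- move=> x y z Hx Hy Hz /wlebE /(wle_base Hx Hy (conj Tt Ttr)) h1
                         /wlebE /(wle_base Hy Hz (conj Tt Ttr)) h2.
  apply/wlebE/(wle_base Hx Hz (conj Tt Ttr)).
  exact: (lexle_trans Ttr (DS_g Hx) (DS_g Hy) (DS_g Hz)) h1 h2.
Qed.

Lemma wleb_total x y : wleb x y || wleb y x.
Proof.
have := @TT_all (maxsym (x ++ y)).+1 0 (maxsym (x ++ y)) (ltnSn _); case=> Tt _; apply: Tt.
- by apply/allP => s sx; rewrite leq0n maxsym_ge // mem_cat sx.
- by apply/allP => s sx; rewrite leq0n maxsym_ge // mem_cat sx orbT.
Qed.

Lemma wleb_trans x y z : wleb x y -> wleb y z -> wleb x z.
Proof.
have := @TT_all (maxsym (x ++ y ++ z)).+1 0 (maxsym (x ++ y ++ z)) (ltnSn _); case=> _ Ttr; apply: Ttr.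
- by apply/allP => s sx; rewrite leq0n maxsym_ge // !mem_cat sx.
- by apply/allP => s sx; rewrite leq0n maxsym_ge // !mem_cat sx !orbT.
- by apply/allP => s sx; rewrite leq0n maxsym_ge // !mem_cat sx !orbT.
Qed.

Definition DT : word -> Prop := fun _ => True.
Lemma Tt' x y : DT x -> DT y -> wleb x y || wleb y x.
Proof. move=> _ _; exact: wleb_total. Qed.
Lemma Ttr' x y z : DT x -> DT y -> DT z -> wleb x y -> wleb y z -> wleb x z.
Proof. move=> _ _ _; exact: wleb_trans. Qed.
Lemma DSt s : DS DT s. Proof. by []. Qed.

Lemma wleb_refl x : wleb x x.
Proof. by have := wleb_total x x; rewrite orbb. Qed.

Lemma wle_base' m A B : (forall s, s \in A ++ B -> m <= s) ->
  (wle A B <-> lxb (g wleb (parts m A)) (g wleb (parts m B))).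
Proof.
move=> H; apply: (@wle_base m (maxsym (A ++ B))).
- by apply/allP => s sA; rewrite H ?maxsym_ge // mem_cat sA.
- by apply/allP => s sA; rewrite H ?maxsym_ge // mem_cat sA orbT.
- by split; [move=> x y _ _; exact: wleb_total | move=> x y z _ _ _; exact: wleb_trans].
Qed.



Lemma size_part_le n A x : x \in parts n A -> size x <= size A.
Proof. move=> /parts_size_le h; lia. Qed.

Lemma size_part_lt n A x : x \in parts n A -> n \in A -> size x < size A.
Proof.
move=> /parts_size_le h nA.
have : 0 < count_mem n A by rewrite -has_count has_pred1.
lia.
Qed.

Lemma filter_sub (p q : pred word) s : (forall y, p y -> q y) ->
  filter p (filter q s) = filter p s.
Proof.
move=> H; elim: s => //= y s IH; case Q: (q y) => /=; rewrite IH //.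
by case P: (p y) => //; rewrite (H _ P) in Q.
Qed.

Lemma szlt1 (a b A B : seq nat) N : size a < size A -> size b <= size B ->
  size A + size B < N.+1 -> size a + size b < N.
Proof. lia. Qed.
Lemma szlt2 (a b A B : seq nat) N : size a <= size A -> size b < size B ->
  size A + size B < N.+1 -> size a + size b < N.
Proof. lia. Qed.

Lemma Lmin_aux N : forall A, size A < N -> wle [::] A.
Proof.
elim: N => // N IH A sz.
case: (eqVneq A [::]) => [->|nz]; first exact: wle_nil.
set m := minsym A.
rewrite (@wle_base' m); last by move=> s sA; exact: minsym_le.
have [P [a [E _]]] := parts_rcons m A 0.
have [h [t Eg]] : exists h t, g wleb (parts m A) = h :: t.
  by rewrite E g_rcons; case: (filter _ _) => [|h t] /=; eexists; eexists.
have hm : h \in parts m A by apply: (mem_subseq (g_subseq wleb _)); rewrite Eg mem_head.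
have hs : size h < size A := size_part_lt hm (minsym_mem nz).
have /wlebE h0 := IH h (leq_trans hs sz).
rewrite Eg /=.
case E': (wleb h [::]).
- by right; split=> //; split.
- by left; split.
Qed.

Lemma Lmin A : wleb [::] A.
Proof. by apply/wlebE; apply: (@Lmin_aux (size A).+1). Qed.

Lemma Lup_aux N : forall A k, size A < N -> wle A (rcons A k).
Proof.
elim: N => // N IH A k sz.
set m := minsym (A ++ rcons A k).
rewrite (@wle_base' m); last by move=> s sA; exact: minsym_le.
have [P [a [E1 E2]]] := parts_rcons m A k.
rewrite E2; case: eqP => [km|nkm].
- rewrite -E1 [g _ (rcons _ [::])]g_rcons.
  have -> : filter (wleb [::]) (g wleb (parts m A)) = g wleb (parts m A).
    by apply/all_filterP/allP => y _; exact: Lmin.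
  rewrite -cats1; apply: (@lexle_prefix wleb DT); [exact: Tt' | exact: DSt].
- have mA : m \in A.
    have := minsym_mem (s := A ++ rcons A k) ltac:(by case: (A)).
    have nkm' : m != k by apply/eqP => e; apply: nkm; rewrite e.
    by rewrite -/m mem_cat mem_rcons inE (negbTE nkm') orbb.
  have am : a \in parts m A by rewrite E1 mem_rcons mem_head.
  have /wlebE Ha := IH a k (leq_trans (size_part_lt am mA) sz).
  rewrite E1 !g_rcons.
  apply: (@lexle_filter wleb DT) => //; [exact: Tt' | exact: Ttr'].
Qed.

Lemma Lup A k : wleb A (rcons A k).
Proof. by apply/wlebE; apply: (@Lup_aux (size A).+1). Qed.

Lemma lemma3_aux N k : forall A B, size A + size B < N -> wsim A B -> wsim (rcons A k) (rcons B k).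
Proof.
elim: N => // N IH A B sz [hAB hBA].
set m := minsym (rcons A k ++ rcons B k).
have Hm s : (s \in A) || (s \in B) || (s == k) -> m <= s.
  move=> h; apply: minsym_le; rewrite mem_cat !mem_rcons !inE.
  by case/orP: h => [/orP[]|] ->; rewrite ?orbT.
have HAB : forall s, s \in A ++ B -> m <= s.
  by move=> s; rewrite mem_cat => h; apply: Hm; rewrite h.
have HBA : forall s, s \in B ++ A -> m <= s.
  by move=> s; rewrite mem_cat => /orP[] h; apply: Hm; rewrite h ?orbT.
have HAB' : forall s, s \in rcons A k ++ rcons B k -> m <= s.
  by move=> s; rewrite mem_cat !mem_rcons !inE => /orP[]/orP[] h; apply: Hm; rewrite h ?orbT.
have HBA' : forall s, s \in rcons B k ++ rcons A k -> m <= s.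
  by move=> s; rewrite mem_cat !mem_rcons !inE => /orP[]/orP[] h; apply: Hm; rewrite h ?orbT.
move/(wle_base' HAB): hAB => hAB; move/(wle_base' HBA): hBA => hBA.
have Heq0 := lexle_eqv hAB hBA.
suff Heq : eqv wleb (g wleb (parts m (rcons A k))) (g wleb (parts m (rcons B k))).
  split; [apply/(wle_base' HAB') | apply/(wle_base' HBA')].
  - exact: eqv_lexle Heq.
  - exact: eqv_lexle (eqv_sym Heq).
have [PA [a [EA1 EA2]]] := parts_rcons m A k.
have [PB [b [EB1 EB2]]] := parts_rcons m B k.
rewrite EA2 EB2; case: eqP => [km|nkm].
- rewrite -EA1 -EB1 !g_rcons.
  have fid X : filter (wleb [::]) X = X by apply/all_filterP/allP => y _; exact: Lmin.
  by rewrite !fid eqv_rcons Heq0 wleb_refl.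
- rewrite EA1 EB1 !g_rcons in Heq0 *.
  move: Heq0; rewrite eqv_rcons => /andP[HF /andP[hab hba]].
  have mAB : (m \in A) || (m \in B).
    have := minsym_mem (s := rcons A k ++ rcons B k) ltac:(by case: (A)).
    have nkm' : m != k by apply/eqP => e; apply: nkm; rewrite e.
    by rewrite -/m mem_cat !mem_rcons !inE (negbTE nkm').
  have am : a \in parts m A by rewrite EA1 mem_rcons mem_head.
  have bm : b \in parts m B by rewrite EB1 mem_rcons mem_head.
  have szab : size a + size b < N.
    have h1 := size_part_le am; have h2 := size_part_le bm.
    case/orP: mAB => h.
    + exact: (szlt1 (size_part_lt am h) h2 sz).
    + exact: (szlt2 h1 (size_part_lt bm h) sz).
  have [/wlebE hk1 /wlebE hk2] := IH a b szab (conj (proj1 (wlebE a b) hab) (proj1 (wlebE b a) hba)).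
  rewrite eqv_rcons hk1 hk2 andbT.
  rewrite -(@filter_sub (wleb (rcons a k)) (wleb a)); last by move=> y; exact: wleb_trans (Lup a k).
  rewrite -(@filter_sub (wleb (rcons b k)) (wleb b) (g wleb PB)); last by move=> y; exact: wleb_trans (Lup b k).
  rewrite andbT; apply: (@eqv_filter wleb (wleb (rcons a k)) (wleb (rcons b k)) _ _ _ HF) => x y hxy hyx.
  apply/idP/idP => h.
  + exact: wleb_trans hk2 (wleb_trans h hxy).
  + exact: wleb_trans hk1 (wleb_trans h hyx).
Qed.

Theorem lemma3 (k : nat) (A B : word) :
  wsim A B -> wsim (rcons A k) (rcons B k).
Proof. exact: (@lemma3_aux (size A + size B).+1). Qed.
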